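(* Let $L$ be a complete subfield of $\hat{\bar L}_0$ containing $L_0$, and let $Q_1,Q_2$ be points of $\mathfrak Y_{\rm rig}\hat\otimes L$ with $\pi_{\rm rig}(Q_1)=\pi_{\rm rig}(Q_2)=P$. Write $Q^w:=w_{\rm rig}(Q)$. (1) $Q_1$ is too singular iff $Q_2$ is too singular iff $\nu_{\mathfrak X}(P)\ge e/(e+1)$; in that case $\nu_{\mathfrak Y}(Q_2^w)=1/(e+1)$. (2) If $Q_1,Q_2$ are both canonical or both anti-canonical, then $\nu_{\mathfrak Y}(Q_2^w)=1-\nu_{\mathfrak Y}(Q_1)$. (3) If $Q_1$ is canonical and $Q_2$ is anti-canonical, then $\nu_{\mathfrak Y}(Q_2^w)=e^{-1}\nu_{\mathfrak Y}(Q_1)$. (4) If $Q_1$ is anti-canonical and $Q_2$ is canonical, then $\nu_{\mathfrak Y}(Q_2^w)=1-e(1-\nu_{\mathfrak Y}(Q_1))$.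
   Context: $p$ prime; $L_0/\mathbb Q_p$ finite, ring of integers $\mathcal O_0$, uniformizer $\varpi$, residue field $\kappa\cong\mathbb F_q$; $\mathrm{val}(\varpi)=1$. $X,Y$ are curves over $\mathcal O_0$ (reduced, flat separated finite type, connected one-dimensional geometric fibres), $\pi:Y\to X$ with: $X$ smooth; $Y$ regular; $\pi\otimes\kappa$ has a section $s$; $Y\otimes\kappa$ reduced with two components meeting at $\kappa$-rational points with completed local ring $\cong\kappa[[u,v]]/(uv)$, each singular point the only point over its image; $w$ an $\mathcal O_0$-automorphism of $Y$ whose reduction interchanges the components; $\pi$ finite flat of degree $1+e$, $e>1$ an integer. $\mathfrak X_{\rm rig},\mathfrak Y_{\rm rig}$ are the Raynaud generic fibres of the formal completions along special fibres. The measures of singularity of Goren–Kassaei are functions $\nu_{\mathfrak Y}$ on points of $\mathfrak Y_{\rm rig}\hat\otimes L$ (values in $\mathbb Q\cap[0,1]$; $0$/$1$ on points specializing to nonsingular points of $s(X\otimes\kappa)$/the other component, a normalized annulus-parameter valuation on residue annuli of singular points) and $\nu_{\mathfrak X}$ on points of $\mathfrak X_{\rm rig}\hat\otimes L$ (values in $\mathbb Q_{\ge0}$, significant when $<1$), satisfying, for every point $Q$: if $\nu_{\mathfrak Y}(Q)<e/(e+1)$ ($Q$ ''canonical'') then $\nu_{\mathfrak Y}(Q)=\nu_{\mathfrak X}(\pi_{\rm rig}Q)$, and canonical points form the image of a section $\mathfrak s_{\rm rig}:\mathfrak X_{\rm rig}[0,e/(e+1))\to\mathfrak Y_{\rm rig}[0,e/(e+1))$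 of $\pi_{\rm rig}$; if $\nu_{\mathfrak Y}(Q)>e/(e+1)$ ($Q$ ''anti-canonical'') then $\nu_{\mathfrak Y}(Q)=1-e^{-1}\nu_{\mathfrak X}(\pi_{\rm rig}Q)$; $\nu_{\mathfrak Y}(Q)=e/(e+1)$ ($Q$ ''too singular'') iff $\nu_{\mathfrak X}(\pi_{\rm rig}Q)\ge e/(e+1)$; $\nu_{\mathfrak Y}(w_{\rm rig}Q)=1-\nu_{\mathfrak Y}(Q)$. *)

(* Defs.v *)
From HB Require Import structures.
From mathcomp Require Import all_boot all_order all_algebra.
Set Implicit Arguments. Unset Strict Implicit. Unset Printing Implicit Defensive.
Import Order.TTheory GRing.Theory Num.Theory.
Local Open Scope ring_scope.

(* Abstract interface to the Goren--Kassaei measures of singularity, for a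
   fixed complete field L.  PtY / PtX stand for the points of
   Y_rig ⊗^ L and X_rig ⊗^ L, [pi] for pi_rig, [w] for w_rig,
   [nuY], [nuX] for nu_Y, nu_X (rational valued), and [e] for the integer
   e > 1 with deg pi = 1 + e. *)

Definition thr (e : nat) : rat := e%:R / (e%:R + 1).

Record GKdata := {
  PtY : Type;
  PtX : Type;
  gk_pi : PtY -> PtX;
  gk_w : PtY -> PtY;
  nuY : PtY -> rat;
  nuX : PtX -> rat;
  e : nat;
  e_gt1 : (1 < e)%N;
  nuY_range : forall Q, 0 <= nuY Q <= 1;
  nuX_ge0 : forall P, 0 <= nuX P;
  nuY_canonical : forall Q, nuY Q < thr e -> nuY Q = nuX (gk_pi Q);
  (* canonical points form the image of a section s_rig of pi_rig over
     X_rig[0, e/(e+1)) with values in Y_rig[0, e/(e+1)) *)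
  gk_s : PtX -> PtY;
  s_section : forall P, nuX P < thr e -> gk_pi (gk_s P) = P;
  s_canonical : forall P, nuX P < thr e -> nuY (gk_s P) < thr e;
  canonical_image : forall Q, nuY Q < thr e -> Q = gk_s (gk_pi Q);
  nuY_anticanonical : forall Q, thr e < nuY Q ->
    nuY Q = 1 - (e%:R)^-1 * nuX (gk_pi Q);
  nuY_toosingular : forall Q, nuY Q = thr e <-> thr e <= nuX (gk_pi Q);
  nuY_w : forall Q, nuY (gk_w Q) = 1 - nuY Q
}.

Definition canonical (D : GKdata) (Q : PtY D) := nuY Q < thr (e D).
Definition anticanonical (D : GKdata) (Q : PtY D) := thr (e D) < nuY Q.
Definition too_singular (D : GKdata) (Q : PtY D) := nuY Q = thr (e D).

(* Main.v *)
Require Import Defs.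
From HB Require Import structures.
From mathcomp Require Import all_boot all_order all_algebra.
From mathcomp Require Import ring.
Import Order.TTheory GRing.Theory Num.Theory.
Local Open Scope ring_scope.

Theorem corollary2p4 (D : GKdata) (Q1 Q2 : PtY D) (P : PtX D)
  (h1 : gk_pi Q1 = P) (h2 : gk_pi Q2 = P) :
  [/\ (too_singular Q1 <-> too_singular Q2)
      /\ (too_singular Q2 <-> thr (e D) <= nuX P)
      /\ (too_singular Q1 -> nuY (gk_w Q2) = 1 / ((e D)%:R + 1)),
      (canonical Q1 /\ canonical Q2 \/ anticanonical Q1 /\ anticanonical Q2) ->
        nuY (gk_w Q2) = 1 - nuY Q1,
      canonical Q1 -> anticanonical Q2 ->
        nuY (gk_w Q2) = ((e D)%:R)^-1 * nuY Q1
    & anticanonical Q1 -> canonical Q2 ->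
        nuY (gk_w Q2) = 1 - (e D)%:R * (1 - nuY Q1)].
Proof.
have ts : forall Q, gk_pi Q = P -> (too_singular Q <-> thr (e D) <= nuX P).
  by move=> Q hQ; rewrite /too_singular -hQ; exact: nuY_toosingular.
have e0 : (e D)%:R != 0 :> rat.
  by rewrite pnatr_eq0 -lt0n; apply: ltn_trans (e_gt1 D).
have can : forall Q, gk_pi Q = P -> canonical Q -> nuY Q = nuX P.
  by move=> Q hQ c; rewrite (nuY_canonical c) hQ.
have anti : forall Q, gk_pi Q = P -> anticanonical Q ->
    nuY Q = 1 - ((e D)%:R)^-1 * nuX P.
  by move=> Q hQ c; rewrite (nuY_anticanonical c) hQ.
split.
- split; first by rewrite (ts _ h1) (ts _ h2).
  split; first exact: ts.
  move=> /(ts _ h1) /(ts _ h2) t2; rewrite nuY_w t2 /thr.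
  have ne : (e D)%:R + 1 != 0 :> rat by rewrite (_ : (e D)%:R + 1 = (e D).+1%:R :> rat) ?pnatr_eq0 // -addn1 natrD.
  by field.
- move=> [[c1 c2]|[a1 a2]]; rewrite nuY_w.
    by rewrite (can _ h2 c2) (can _ h1 c1).
  by rewrite (anti _ h2 a2) (anti _ h1 a1).
- move=> c1 a2; rewrite nuY_w (anti _ h2 a2) (can _ h1 c1).
  by field.
- move=> a1 c2; rewrite nuY_w (can _ h2 c2) (anti _ h1 a1).
  by field.
Qed.
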